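(* Let $(X,d)$, $(\Lambda,d_\Lambda)$ be compact metric spaces, $\tau:\Lambda\times X\to X$ continuous and $q:X\to\mathcal P(\Lambda)$ continuous. Assume: (W1) each $\tau_\lambda$ is $1$-Lipschitz on $X$; (CP1) there are an integer $M\ge1$ and $0<s<1$ such that $\tau_{\lambda^M}$ is $s$-Lipschitz on $X$ for every $\lambda^M\in\Lambda^M$; (H2) there is $r\ge0$ with $d(\tau(\lambda_1,x),\tau(\lambda_2,x))\le r\,d_\Lambda(\lambda_1,\lambda_2)$ for all $\lambda_1,\lambda_2$, $x$; (H3) there is $t\ge0$ with $d_{MK}(q_x,q_y)\le t\,d(x,y)$ for all $x,y\in X$; (H4) $q_x(A)>0$ for every nonempty open $A\subseteq\Lambda$ and every $x\in X$; and suppose $s+r\,M\,t<1$. Let $A_{\mathcal R}$ be the unique nonempty compact set with $F_{\mathcal R}(A_{\mathcal R})=A_{\mathcal R}$ and $\mu_{\mathcal R}$ the unique probability with $T_q(\mu_{\mathcal R})=\mu_{\mathcal R}$. Then $\operatorname{supp}(\mu_{\mathcal R})=A_{\mathcal R}$.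
   Context: $\mathcal{P}(Y)$ is the set of Borel probability measures on a compact metric space $Y$, with $d_{MK}(\mu,\nu)=\sup_{f\in \mathrm{Lip}_1(Y)}\{\int f\,d\mu-\int f\,d\nu\}$. $\tau_\lambda(x)=\tau(\lambda,x)$; for $\lambda^j=(\lambda_0,\dots,\lambda_{j-1})$, $\tau_{\lambda^j}=\tau_{\lambda_{j-1}}\circ\cdots\circ\tau_{\lambda_0}$. $F_{\mathcal R}(B)=\bigcup_{\lambda\in\Lambda}\tau_\lambda(B)$ on nonempty compact subsets $B$ of $X$. The Markov operator $T_q$ on $\mathcal P(X)$ is defined by $\int_X f\,dT_q(\mu)=\int_X\int_\Lambda f(\tau(\lambda,x))\,dq_x(\lambda)\,d\mu(x)$ for $f\in C(X)$. *)

(* Defs.v *)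
From HB Require Import structures.
From mathcomp Require Import all_boot all_order all_algebra.
From mathcomp Require Import all_classical all_reals all_analysis.

Set Implicit Arguments.
Unset Strict Implicit.
Unset Printing Implicit Defensive.

Import Order.TTheory GRing.Theory Num.Theory.
Import numFieldNormedType.Exports.

Local Open Scope classical_set_scope.
Local Open Scope ring_scope.

(* Metric spaces (with distance [mdist]) that carry a point; the compact
   metric spaces of the paper are nonempty. *)
#[short(type="pmetricType")]
HB.structure Definition PointedMetric (K : numDomainType) :=
  { M of Metric K M & isPointed M }.

Definition borel {R : realType} (X : pmetricType R) :=
  g_sigma_algebraType (@open X).

Notation PM R Y := (probability (borel Y) R).

Section defs.
Context {R : realType}.

Definition Lip1 {Y : pmetricType R} (f : Y -> R) : Prop :=
  forall a b : Y, `|f a - f b| <= mdist a b.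

Definition dMK {Y : pmetricType R} (mu nu : PM R Y) : \bar R :=
  ereal_sup [set (\int[mu]_y (f y)%:E - \int[nu]_y (f y)%:E)%E | f in @Lip1 Y].

(* Continuity of x |-> q_x into P(Lambda) with the weak topology. *)
Definition weak_continuous {X L : pmetricType R} (q : X -> PM R L) : Prop :=
  forall f : L -> R, continuous f ->
    continuous (fun x : X => fine (\int[q x]_l (f l)%:E)%E).

Definition msupport {Y : pmetricType R} (mu : PM R Y) : set Y :=
  [set y | forall A : set Y, open A -> A y -> (0 < mu A)%E].

(* tau_{lambda^j} = tau_{lambda_{j-1}} o ... o tau_{lambda_0} *)
Definition tau_seq {L X : Type} (tau : L -> X -> X) (l : seq L) (x : X) : X :=
  foldl (fun y a => tau a y) x l.

Definition F_R {L X : Type} (tau : L -> X -> X) (B : set X) : set X :=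
  \bigcup_(l in [set: L]) (tau l @` B).

(* mu is a fixed point of the Markov operator T_q:
   int f dT_q(mu) = int_X int_Lambda f(tau(lambda,x)) dq_x(lambda) dmu(x),
   for all f in C(X). *)
Definition Tq_invariant {X L : pmetricType R} (tau : L -> X -> X)
    (q : X -> PM R L) (mu : PM R X) : Prop :=
  forall f : X -> R, continuous f ->
    (\int[mu]_x (f x)%:E = \int[mu]_x (\int[q x]_l (f (tau l x))%:E))%E.

End defs.

(* Main.v *)
Set Warnings "-notation-overridden,-ambiguous-paths,-notation-incompatible-prefix".
Require Import Defs.
From HB Require Import structures.
From mathcomp Require Import all_boot all_order all_algebra.
From mathcomp Require Import all_classical all_reals all_analysis.
From mathcomp Require Import measurable_realfun ring lra.
Import Order.TTheory GRing.Theory Num.Theory.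
Import numFieldNormedType.Exports.
Local Open Scope classical_set_scope.
Local Open Scope ring_scope.
Section Basics.
Context {R : realType}.

Lemma lip_cont {Y : pmetricType R} (g : Y -> R) c : 0 <= c ->
  (forall x y, `|g x - g y| <= c * mdist x y) -> continuous g.
Proof.
move=> c0 H x; apply/cvgrPdist_lt => e e0.
have c1 : 0 < c + 1 by rewrite ltr_wpDl.
apply: filterS (nbhsx_ballx x (e / (c + 1)) _); last by rewrite divr_gt0.
move=> y; rewrite ballEmdist /= => hy.
apply: (le_lt_trans (H x y)).
apply: (le_lt_trans (y := (c + 1) * mdist x y)).
  by rewrite ler_wpM2r ?mdist_ge0 // lerDl.
by rewrite -ltr_pdivlMl // mulrC.
Qed.

Lemma cont_meas {Y : pmetricType R} (g : Y -> R) : continuous g ->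
  measurable_fun setT (g : borel Y -> R).
Proof.
move=> cg; apply: (@measurability _ _ (borel Y) R setT g (RGenOpens.G (R:=R))).
  exact: RGenOpens.measurableE.
move=> _ [_ [x [y ->]] <-]; apply: sub_sigma_algebra; rewrite setTI.
by apply: open_comp; [move=> z _; exact: cg | exact: itv_open].
Qed.

Lemma mball_open {Y : pmetricType R} (x : Y) e : open [set y | mdist x y < e].
Proof.
rewrite openE => y /= hy; apply/nbhs_ballP.
exists (e - mdist x y); first by rewrite /= subr_gt0.
move=> z; rewrite ballEmdist /= => hz.
apply: (le_lt_trans (metric_triangle x y z)).
by rewrite -ltrBrDl.
Qed.

Lemma open_meas {Y : pmetricType R} (U : set Y) : open U ->
  measurable (U : set (borel Y)).
Proof. by move=> oU; apply: sub_sigma_algebra. Qed.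

End Basics.
Section Integ.
Context {R : realType} {d : measure_display} {T : measurableType d}
  (P : probability T R).

Definition Iq (h : T -> R) := fine (\int[P]_x (h x)%:E)%E.

Section One.
Variables (h : T -> R) (K : R).
Hypotheses (mh : measurable_fun setT h) (hb : forall x, 0 <= h x <= K).

Let h0 x : 0 <= h x. Proof. by case/andP: (hb x). Qed.
Let hK x : h x <= K. Proof. by case/andP: (hb x). Qed.

Lemma int_fin : (0 <= \int[P]_x (h x)%:E <= K%:E)%E.
Proof.
apply/andP; split.
  by apply: integral_ge0 => x _; rewrite lee_fin.
apply: (le_trans (y := (\int[P]_x (cst K%:E x))%E)).
  apply: ge0_le_integral => //.
  - by move=> x _; rewrite lee_fin.
  - by apply/measurable_EFinP.
  - by move=> x _; rewrite lee_fin.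
by rewrite integral_cst //; move: (probability_setT P) => /= ->; rewrite mule1.
Qed.

Lemma IE : (\int[P]_x (h x)%:E)%E = (Iq h)%:E.
Proof.
have /andP[a b] := int_fin.
rewrite fineK // ge0_fin_numE //; exact: (le_lt_trans b (ltry _)).
Qed.

Lemma I_bnd : 0 <= Iq h <= K.
Proof. by have := int_fin; rewrite IE !lee_fin. Qed.

Lemma I_scale k : 0 <= k -> Iq (fun x => k * h x) = k * Iq h.
Proof.
move=> k0.
have mhk : measurable_fun setT (fun x => k * h x).
  by apply: measurable_funM => //; exact: measurable_cst.
have hbk x : 0 <= k * h x <= k * K.
  by rewrite mulr_ge0 //= ler_wpM2l.
rewrite /Iq.
under eq_integral do rewrite EFinM.
rewrite ge0_integralZl //; last by move=> x _; rewrite lee_fin.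
  by rewrite IE.
by apply/measurable_EFinP.
Qed.

Lemma I_lb (B : set T) c : measurable B -> 0 <= c ->
  (forall x, B x -> c <= h x) -> c * fine (P B) <= Iq h.
Proof.
move=> mB c0 hB; rewrite -lee_fin -IE EFinM fineK ?fin_num_measure //.
rewrite (_ : P B = P (B `&` setT)); last by rewrite setIT.
rewrite -integral_indic // -ge0_integralZl //; last first.
  by apply/measurable_EFinP; exact: measurable_indic.
apply: ge0_le_integral => //.
- by move=> x _; rewrite lee_fin mulr_ge0.
- under eq_fun do rewrite -EFinM.
  apply/measurable_EFinP; apply: measurable_funM; first exact: measurable_cst.
  exact: measurable_indic.
- by apply/measurable_EFinP.
move=> x _; rewrite -EFinM lee_fin indicE; case: (boolP (x \in B)) => [/set_mem/hB|_].
  by rewrite mulr1.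
by rewrite mulr0.
Qed.

Lemma I_ub (B : set T) c : measurable B -> 0 <= c ->
  (forall x, h x <= c * \1_B x) -> Iq h <= c * fine (P B).
Proof.
move=> mB c0 hB; rewrite -lee_fin -IE EFinM fineK ?fin_num_measure //.
rewrite (_ : P B = P (B `&` setT)); last by rewrite setIT.
rewrite -integral_indic // -ge0_integralZl //; last first.
  by apply/measurable_EFinP; exact: measurable_indic.
apply: ge0_le_integral => //.
- by move=> x _; rewrite lee_fin.
- by apply/measurable_EFinP.
- under eq_fun do rewrite -EFinM.
  apply/measurable_EFinP; apply: measurable_funM; first exact: measurable_cst.
  exact: measurable_indic.
by move=> x _; rewrite -EFinM lee_fin.
Qed.

End One.

Lemma I_addc (h : T -> R) (K c : R) : measurable_fun setT h -> (forall x, 0 <= h x <= K) ->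
  0 <= c -> Iq (fun x => h x + c) = Iq h + c.
Proof.
move=> mh hb c0; apply: EFin_inj.
have mhc : measurable_fun setT (fun x => h x + c).
  by apply: measurable_funD => //; exact: measurable_cst.
have hbc x : 0 <= h x + c <= K + c.
  by case/andP: (hb x) => a b; rewrite addr_ge0 //= lerD2r.
rewrite -(IE _ _ mhc hbc) EFinD -(IE _ _ mh hb).
under eq_integral do rewrite EFinD.
rewrite ge0_integralD //.
- by rewrite integral_cst //; move: (probability_setT P) => /= ->; rewrite mule1.
- by move=> x _; rewrite lee_fin; case/andP: (hb x).
- by apply/measurable_EFinP.
Qed.

Lemma I_mono (h1 h2 : T -> R) (K1 K2 : R) : measurable_fun setT h1 -> (forall x, 0 <= h1 x <= K1) ->
  measurable_fun setT h2 -> (forall x, 0 <= h2 x <= K2) ->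
  (forall x, h1 x <= h2 x) -> Iq h1 <= Iq h2.
Proof.
move=> m1 b1 m2 b2 le12; rewrite -lee_fin -(IE _ _ m1 b1) -(IE _ _ m2 b2).
apply: ge0_le_integral => //.
- by move=> x _; rewrite lee_fin; case/andP: (b1 x).
- by apply/measurable_EFinP.
- by apply/measurable_EFinP.
- by move=> x _; rewrite lee_fin.
Qed.

Lemma I_cst (c : R) : 0 <= c -> Iq (fun=> c) = c.
Proof.
move=> c0; rewrite /Iq integral_cst //.
by move: (probability_setT P) => /= ->; rewrite mule1.
Qed.

End Integ.
Arguments IE {R d T} P {h K}.
Arguments I_bnd {R d T} P {h K}.
Arguments int_fin {R d T} P {h K}.
Arguments I_scale {R d T} P {h K}.
Arguments I_lb {R d T} P {h K}.
Arguments I_ub {R d T} P {h K}.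
Arguments I_addc {R d T} P {h K}.
Arguments I_mono {R d T} P {h1 h2 K1 K2}.

From mathcomp Require Import lra.

Section Pop.
Context {R : realType} {X L : pmetricType R} (tau : L -> X -> X)
  (q : X -> probability (borel L) R) (r t : R).
Hypotheses (r0 : 0 <= r) (t0 : 0 <= t)
  (W1 : forall (l : L) (x y : X), mdist (tau l x) (tau l y) <= mdist x y)
  (H2 : forall (l1 l2 : L) (x : X), mdist (tau l1 x) (tau l2 x) <= r * mdist l1 l2)
  (H3 : forall x y : X, (dMK (q x) (q y) <= (t * mdist x y)%:E)%E).

Definition good {Y : pmetricType R} (g : Y -> R) := exists c K, 0 <= c /\
  (forall x, 0 <= g x <= K) /\ (forall x y, `|g x - g y| <= c * mdist x y).

Lemma good_meas {Y : pmetricType R} (g : Y -> R) : good g ->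
  measurable_fun setT (g : borel Y -> R).
Proof. by case=> c [K [c0 [_ gL]]]; apply: cont_meas; exact: lip_cont gL. Qed.

Lemma good_bnd {Y : pmetricType R} (g : Y -> R) : good g ->
  exists K, forall x, 0 <= g x <= K.
Proof. by case=> c [K [c0 [gb _]]]; exists K. Qed.

Lemma abs_from_le {Y : pmetricType R} (f : Y -> R) C :
  (forall x y, f x <= f y + C * mdist x y) ->
  forall x y, `|f x - f y| <= C * mdist x y.
Proof.
move=> H x y; rewrite ler_norml; apply/andP; split.
  by have := H y x; rewrite metric_sym; lra.
by have := H x y; lra.
Qed.

Lemma good_lcomp (g : X -> R) (x : X) : good g -> good (fun l => g (tau l x)).
Proof.
case=> c [K [c0 [gb gL]]]; exists (c * r), K; split; first exact: mulr_ge0.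
split => // a b; apply: (le_trans (gL _ _)).
by rewrite -mulrA ler_wpM2l.
Qed.

Definition Pop (g : X -> R) (x : X) : R := Iq (q x) (fun l => g (tau l x)).

Lemma Pop_good g : good g -> good (Pop g).
Proof.
move=> gg; have [c [K [c0 [gb gL]]]] := gg.
pose c' := c * r + 1.
have c'0 : 0 < c' by rewrite /c' ltr_wpDl // mulr_ge0.
have mu y := good_meas _ (good_lcomp g y gg).
have bu y l := gb (tau l y).
exists (c + c' * t), K; split.
  by rewrite addr_ge0 // mulr_ge0 // ltW.
split.
  by move=> x; apply: I_bnd; [exact: mu | exact: bu].
apply: abs_from_le => x y.
have step1 : Pop g x <= Iq (q x) (fun l => g (tau l y)) + c * mdist x y.
  rewrite -(I_addc (q x) _ (mu y) (bu y)); last by rewrite mulr_ge0 // mdist_ge0.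
  rewrite /Pop; apply: (@I_mono _ _ _ (q x) _ _ _ (K + c * mdist x y) (mu x) (bu x)).
  - apply: measurable_funD => //; exact: measurable_cst.
  - move=> l; case/andP: (bu y l) => a b.
    rewrite addr_ge0 ?mulr_ge0 ?mdist_ge0 //=.
    by rewrite lerD2r.
  move=> l; have := gL (tau l x) (tau l y).
  have := W1 l x y; move=> hw hl.
  have : g (tau l x) - g (tau l y) <= c * mdist x y.
    apply: le_trans (ler_norm _) _; apply: (le_trans hl).
    by rewrite ler_wpM2l.
  lra.
have step2 : Iq (q x) (fun l => g (tau l y)) <=
    Iq (q y) (fun l => g (tau l y)) + c' * t * mdist x y.
  pose v l := c'^-1 * g (tau l y).
  have Lv : Lip1 v.
    move=> a b; rewrite /v -mulrBr normrM gtr0_norm ?invr_gt0 //.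
    rewrite ler_pdivrMl //.
    apply: (le_trans (gL _ _)); apply: (le_trans (y := c * (r * mdist a b))).
      by rewrite ler_wpM2l.
    rewrite mulrA ler_wpM2r ?mdist_ge0 // /c'; lra.
  have hs := @ereal_sup_ubound _
    [set (\int[q x]_y (f y)%:E - \int[q y]_y (f y)%:E)%E | f in @Lip1 _ L]
    _ (ex_intro2 _ _ v Lv erefl).
  have := le_trans hs (H3 x y).
  have mv : measurable_fun setT (v : borel L -> R).
    by apply: measurable_funM => //; exact: measurable_cst.
  have ci : 0 <= c'^-1 by rewrite invr_ge0 ltW.
  have bv l : 0 <= v l <= c'^-1 * K.
    case/andP: (bu y l) => a b.
    by rewrite /v mulr_ge0 //= ler_wpM2l.
  rewrite (IE _ mv bv) (IE _ mv bv) -EFinB lee_fin /v.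
  rewrite (I_scale _ (mu y) (bu y) _ ci).
  rewrite (I_scale _ (mu y) (bu y) _ ci).
  rewrite -mulrBr ler_pdivrMl // => h.
  rewrite -mulrA; lra.
rewrite /Pop mulrDl; rewrite /Pop in step1; lra.
Qed.

Lemma Popn_good k g : good g -> good (iter k Pop g).
Proof. by elim: k => [//|k IH] /IH; rewrite iterS; exact: Pop_good. Qed.

Lemma Pop_le (g : X -> R) (y : X) (Kb : R) : good g ->
  (forall l, g (tau l y) <= Kb) -> Pop g y <= Kb.
Proof.
move=> gg hl; have [c [K [c0 [gb gL]]]] := gg.
have Kb0 : 0 <= Kb.
  by apply: le_trans (hl point); case/andP: (gb (tau point y)).
rewrite -(I_cst (q y) _ Kb0) /Pop.
apply: (@I_mono _ _ _ (q y) _ _ K Kb (good_meas _ (good_lcomp g y gg))).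
- by move=> l; exact: gb.
- exact: measurable_cst.
- by move=> _; rewrite Kb0 lexx.
exact: hl.
Qed.

Lemma Popn_le k : forall (g : X -> R) (y : X) (Kb : R), good g ->
  (forall l, size l = k -> g (tau_seq tau l y) <= Kb) -> iter k Pop g y <= Kb.
Proof.
elim: k => [|k IH] g y Kb gg hl; first by have := hl [::] erefl.
rewrite iterSr; apply: IH; first exact: Pop_good.
move=> l sl; apply: Pop_le => // l0.
have := hl (rcons l l0); rewrite size_rcons sl => /(_ erefl).
by rewrite /tau_seq foldl_rcons.
Qed.

Lemma inv_iter (mu : probability (borel X) R) : Tq_invariant tau q mu ->
  forall k g, good g ->
  (\int[mu]_x (g x)%:E = \int[mu]_x (iter k Pop g x)%:E)%E.
Proof.
move=> inv; elim=> [//|k IH] g gg.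
rewrite iterSr -IH; last exact: Pop_good.
have [c [K [c0 [gb gL]]]] := gg.
rewrite (inv g (lip_cont _ _ c0 gL)).
apply: eq_integral => x _.
have bx l : 0 <= g (tau l x) <= K by exact: gb.
by rewrite /Pop (IE (q x) (good_meas _ (good_lcomp g x gg)) bx).
Qed.

End Pop.
Section Gen.
Context {R : realType}.

Lemma tau_seq_cat {L X : Type} (tau : L -> X -> X) l1 l2 x :
  tau_seq tau (l1 ++ l2) x = tau_seq tau l2 (tau_seq tau l1 x).
Proof. by rewrite /tau_seq foldl_cat. Qed.

Lemma contr_k {X L : pmetricType R} (tau : L -> X -> X) (M : nat) (s : R) :
  0 <= s ->
  (forall (l : seq L) (x y : X), size l = M ->
      mdist (tau_seq tau l x) (tau_seq tau l y) <= s * mdist x y) ->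
  forall k (l : seq L) (x y : X), size l = (k * M)%N ->
      mdist (tau_seq tau l x) (tau_seq tau l y) <= s ^+ k * mdist x y.
Proof.
move=> s0 CP; elim=> [|k IH] l x y.
  by rewrite mul0n => /size0nil ->; rewrite expr0 mul1r.
rewrite mulSn => sl.
rewrite -(cat_take_drop M l) !tau_seq_cat.
have st : size (take M l) = M by rewrite size_takel // sl leq_addr.
have sd : size (drop M l) = (k * M)%N by rewrite size_drop sl addKn.
apply: (le_trans (IH _ _ _ sd)).
by rewrite exprSr -mulrA ler_wpM2l ?exprn_ge0 // CP.
Qed.

Lemma diam_bound {X : pmetricType R} : compact [set: X] ->
  exists D, 0 <= D /\ forall x y : X, mdist x y <= D.
Proof.
move=> cX.
have L1 : forall x y : X, `|mdist point x - mdist point y| <= 1 * mdist x y.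
  apply: (@abs_from_le R X (mdist point) 1) => x y.
  rewrite mul1r; apply: (le_trans (metric_triangle point y x)).
  by rewrite metric_sym [mdist y x]metric_sym.
have cf : continuous (mdist (point : X)) by exact: lip_cont ler01 L1.
have := compact_bounded (continuous_compact (continuous_subspaceT cf) cX).
case=> M [_ HM].
have M1 : M < `|M| + 1 by apply: le_lt_trans (ler_norm M) _; rewrite ltrDl.
have hB := HM (`|M| + 1) M1.
exists (2 * (`|M| + 1)); split; first by rewrite mulr_ge0 // addr_ge0.
have hb (z : X) : mdist point z <= `|M| + 1.
  by apply: le_trans (ler_norm _) _; apply: hB; exists z.
move=> x y; apply: (le_trans (metric_triangle x point y)).
by rewrite metric_sym mulr2n mulrDl mul1r lerD.
Qed.

End Gen.
Section DistSet.
Context {R : realType} {X : pmetricType R} (A : set X) (An : A !=set0).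

Definition dA (x : X) : R := inf [set mdist x a | a in A].

Lemma dA_le x a : A a -> dA x <= mdist x a.
Proof.
move=> Aa; apply: ge_inf; last by exists a.
by exists 0 => _ [b _ <-]; exact: mdist_ge0.
Qed.

Lemma dA_ge x m : (forall a, A a -> m <= mdist x a) -> m <= dA x.
Proof.
move=> H; apply: lb_le_inf.
  by case: An => a Aa; exists (mdist x a), a.
by move=> _ [a Aa <-]; exact: H.
Qed.

Lemma dA_ge0 x : 0 <= dA x.
Proof. by apply: dA_ge => a _; exact: mdist_ge0. Qed.

Lemma dA_lip x y : `|dA x - dA y| <= 1 * mdist x y.
Proof.
apply: (@abs_from_le R X dA 1) => {}x {}y; rewrite mul1r.
rewrite -lerBlDr; apply: dA_ge => a Aa; rewrite lerBlDr.
apply: (le_trans (@dA_le x a Aa)).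
by rewrite addrC; exact: metric_triangle.
Qed.

Lemma dA_good D : (forall x y : X, mdist x y <= D) -> good dA.
Proof.
move=> hD; exists 1, D; split => //; split; last exact: dA_lip.
move=> x; rewrite dA_ge0 /=.
by case: An => a Aa; apply: le_trans (@dA_le x a Aa) (hD _ _).
Qed.

End DistSet.
Theorem mainTheorem13 (R : realType) (X L : pmetricType R)
  (tau : L -> X -> X) (q : X -> probability (borel L) R)
  (M : nat) (s r t : R) :
  compact [set: X] -> compact [set: L] ->
  continuous (fun p : L * X => tau p.1 p.2) ->
  weak_continuous q ->
  (* (W1) *)
  (forall (l : L) (x y : X), mdist (tau l x) (tau l y) <= mdist x y) ->
  (* (CP1) *)
  (1 <= M)%N -> 0 < s < 1 ->
  (forall (l : seq L) (x y : X), size l = M ->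
      mdist (tau_seq tau l x) (tau_seq tau l y) <= s * mdist x y) ->
  (* (H2) *)
  0 <= r ->
  (forall (l1 l2 : L) (x : X), mdist (tau l1 x) (tau l2 x) <= r * mdist l1 l2) ->
  (* (H3) *)
  0 <= t ->
  (forall x y : X, (dMK (q x) (q y) <= (t * mdist x y)%:E)%E) ->
  (* (H4) *)
  (forall (x : X) (A : set L), open A -> A !=set0 -> (0 < q x A)%E) ->
  s + r * M%:R * t < 1 ->
  forall (A_R : set X) (mu_R : probability (borel X) R),
    A_R !=set0 -> compact A_R -> F_R tau A_R = A_R ->
    Tq_invariant tau q mu_R ->
    msupport mu_R = A_R.
Proof.
move=> cX cL ctau wq W1 M1 /andP[s0 s1] CP r0 H2 t0 H3 H4 _ A mu An cA FA inv.
have [D [D0 hD]] := diam_bound cX.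
have tauA l a : A a -> A (tau l a).
  by move=> Aa; rewrite -FA; exists l => //; exists a.
have tauseqA l : forall a, A a -> A (tau_seq tau l a).
  by elim: l => [//|l0 l IH] a Aa /=; apply: IH; exact: tauA.
have pre n : forall a, A a -> exists l a', size l = n /\ A a' /\ tau_seq tau l a' = a.
  elim: n => [|n IH] a Aa; first by exists [::], a.
  have [l [a' [sl [Aa' <-]]]] := IH a Aa.
  have : F_R tau A a' by rewrite FA.
  rewrite /F_R /= => -[l0 _ [a'' Aa'' ea]].
  exists (l0 :: l), a''; split; first by rewrite /= sl.
  by split => //; rewrite /tau_seq /= ea.
have contr := contr_k _ _ _ (ltW s0) CP.
have gd := @dA_good _ _ A An D hD.
have dAc l x : size l = M -> dA A (tau_seq tau l x) <= s * dA A x.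
  move=> sl; rewrite mulrC -ler_pdivrMr //; apply: dA_ge => // a Aa.
  rewrite ler_pdivrMr // mulrC.
  apply: le_trans (@dA_le _ _ A _ _ (tauseqA l a Aa)) _.
  exact: CP.
have PG := Pop_good tau q r t r0 t0 W1 H2 H3.
have PnG := Popn_good tau q r t r0 t0 W1 H2 H3.
have Pnle := Popn_le tau q r t r0 t0 W1 H2 H3.
have invI := inv_iter tau q r t r0 t0 W1 H2 H3 mu inv.
have [c1 [K1 [_ [b1 _]]]] := gd.
have m1 := good_meas _ gd.
have finpos (B : set (borel X)) : measurable B -> (0 < mu B)%E -> 0 < fine (mu B).
  move=> mB pB; apply: fine_gt0; rewrite pB /=.
  exact: le_lt_trans (probability_le1 mu mB) (ltry _).
have int0 : Iq mu (dA A) = 0.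
  have e1 := invI M _ gd.
  have gM := PnG M _ gd.
  have [cM [KM [_ [bM _]]]] := gM.
  have mM := good_meas _ gM.
  rewrite (IE mu m1 b1) (IE mu mM bM) in e1; have e2 := EFin_inj e1.
  have bs x : 0 <= s * dA A x <= s * K1.
    case/andP: (b1 x) => a b; apply/andP; split.
      exact: mulr_ge0 (ltW s0) a.
    by rewrite (ler_pM2l s0).
  have mS : measurable_fun setT ((fun x => s * dA A x) : borel X -> R).
    by apply: measurable_funM => //; exact: measurable_cst.
  have le1 : Iq mu (iter M (Pop tau q) (dA A)) <= Iq mu (fun x => s * dA A x).
    apply: (I_mono mu mM bM mS bs) => x.
    by apply: Pnle => // l sl; exact: dAc.
  rewrite (I_scale mu m1 b1 _ (ltW s0)) -e2 in le1.
  have := I_bnd mu m1 b1 => /andP[i0 _].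
  apply/eqP; rewrite eq_le i0 andbT; nra.
have SA : msupport mu `<=` A.
  move=> y Sy; apply: contrapT => nAy.
  have cAc : closed A := compact_closed (@metric_hausdorff _ X) cA.
  have : open (~` A) by rewrite openC.
  rewrite openE => /(_ y nAy) /nbhs_ballP [e /= e0 he].
  pose B := [set z : X | mdist y z < e / 2].
  have oB : open B := mball_open y _.
  have Bpos : (0 < mu B)%E.
    by apply: Sy => //; rewrite /B /= mdistxx divr_gt0.
  have lb : e / 2 * fine (mu B) <= Iq mu (dA A).
    apply: (I_lb mu m1 b1 B (e / 2) (open_meas _ oB)); first by rewrite divr_ge0 // ltW.
    move=> z Bz; apply: dA_ge => // a Aa.
    have : ~ ball y e a by move=> /he.
    rewrite ballEmdist /= => /negP; rewrite -leNgt => ea.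
    have := metric_triangle y z a; rewrite /B /= in Bz; lra.
  have := finpos _ (open_meas _ oB) Bpos.
  rewrite int0 in lb => fp.
  have : 0 < e / 2 * fine (mu B) by rewrite mulr_gt0 // divr_gt0.
  by rewrite ltNge lb.
have FS l0 x : msupport mu x -> msupport mu (tau l0 x).
  move=> Sx U oU Uz.
  set z0 := tau l0 x.
  have nU : nbhs z0 U by apply: open_nbhs_nbhs; split.
  move: nU => /nbhs_ballP [dl /= dl0 hdl].
  pose h z := Num.max 0 (dl - mdist z0 z).
  have hb z : 0 <= h z <= dl.
    rewrite /h le_max lexx /= ge_max (ltW dl0) /=.
    by rewrite lerBlDr lerDl mdist_ge0.
  have hL : forall a b, `|h a - h b| <= 1 * mdist a b.
    apply: (@abs_from_le R X h 1) => a b; rewrite mul1r /h ge_max.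
    apply/andP; split; first by rewrite addr_ge0 ?mdist_ge0 // le_max lexx.
    apply: (le_trans (y := dl - mdist z0 b + mdist a b)).
      by have := metric_triangle z0 a b; lra.
    by rewrite lerD2r le_max lexx orbT.
  have gh : good h by exists 1, dl; split => //; split.
  have mh := good_meas _ gh.
  have mU := open_meas _ oU.
  have hU z : h z <= dl * \1_U z.
    rewrite indicE; case: (boolP (z \in U)) => [_|/negP zU]; first by rewrite mulr1; case/andP: (hb z).
    rewrite mulr0 /h ge_max lexx /= subr_le0 leNgt; apply/negP => hz.
    by apply: zU; rewrite inE; apply: hdl; rewrite ballEmdist.
  suff ph : 0 < Iq mu h.
    rewrite lt0e measure_ge0 andbT; apply/negP => /eqP mU0.
    have := I_ub mu mh hb U dl mU (ltW dl0) hU; rewrite mU0 /= mulr0.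
    by rewrite leNgt ph.
  have gP := PG h gh.
  have [C [KP [C0 [bP LP]]]] := gP.
  have mP := good_meas _ gP.
  have e1 : (\int[mu]_x (h x)%:E = \int[mu]_x (Pop tau q h x)%:E)%E := invI 1 h gh.
  rewrite (IE mu mh hb) (IE mu mP bP) in e1; rewrite (EFin_inj e1).
  pose eps := dl / (2 * (r + 1)).
  have eps0 : 0 < eps by rewrite divr_gt0 // mulr_gt0 // ltr_wpDl.
  have reps : (r + 1) * eps = dl / 2.
    by rewrite /eps; field; rewrite gt_eqF // ltr_wpDl.
  pose Bl := [set l : L | mdist l0 l < eps].
  have oBl : open Bl := mball_open l0 eps.
  have qB : (0 < q x Bl)%E.
    by apply: H4 => //; exists l0; rewrite /Bl /= mdistxx.
  have glx := good_lcomp tau r r0 H2 h x gh.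
  have [cl [Kl [_ [bl _]]]] := glx.
  have px : 0 < Pop tau q h x.
    have pl : dl / 2 * fine (q x Bl) <= Pop tau q h x.
      apply: (I_lb (q x) (good_meas _ glx) bl Bl (dl / 2) (open_meas _ oBl)).
        by rewrite divr_ge0 // ltW.
      move=> l Bll; rewrite /h le_max; apply/orP; right.
      have := H2 l0 l x; rewrite -/z0 => hh.
      have : r * mdist l0 l <= r * eps by apply: ler_wpM2l => //; exact: ltW.
      lra.
    apply: lt_le_trans pl; rewrite mulr_gt0 ?divr_gt0 //.
    apply: fine_gt0; rewrite qB /=.
    exact: le_lt_trans (probability_le1 (q x) (open_meas _ oBl)) (ltry _).
  pose rho := Pop tau q h x / (2 * (C + 1)).
  have rho0 : 0 < rho by rewrite divr_gt0 // mulr_gt0 // ltr_wpDl.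
  have crho : (C + 1) * rho = Pop tau q h x / 2.
    by rewrite /rho; field; rewrite gt_eqF // ltr_wpDl.
  pose Bx := [set z : X | mdist x z < rho].
  have oBx : open Bx := mball_open x rho.
  have Bxpos : (0 < mu Bx)%E by apply: Sx => //; rewrite /Bx /= mdistxx.
  have lb2 : Pop tau q h x / 2 * fine (mu Bx) <= Iq mu (Pop tau q h).
    apply: (I_lb mu mP bP Bx _ (open_meas _ oBx)); first by rewrite divr_ge0 // ltW.
    move=> z Bz; have := LP x z; have := ler_norm (Pop tau q h x - Pop tau q h z).
    have : C * mdist x z <= C * rho by apply: ler_wpM2l => //; exact: ltW.
    lra.
  apply: lt_le_trans lb2; rewrite mulr_gt0 ?divr_gt0 //.
  exact: finpos _ (open_meas _ oBx) Bxpos.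
have Sne : exists x0, msupport mu x0.
  apply: contrapT => nS.
  have hU y : exists U : set X, open U /\ U y /\ mu U = 0%E.
    have : ~ msupport mu y by move=> Sy; apply: nS; exists y.
    move=> /existsNP [U /not_implyP [oU /not_implyP [Uy /negP]]].
    rewrite lt0e measure_ge0 andbT negbK => /eqP mU0.
    by exists U.
  have [f hf] := choice hU.
  move: cX; rewrite compact_cover => /(_ X setT f) [].
  - by move=> i _; case: (hf i).
  - by move=> y _; exists y => //; case: (hf y) => _ [].
  move=> D' _ cov.
  have := @content_sub_fsum _ _ _ mu X _ setT f (finite_fset D')
    (fun i _ => open_meas _ (hf i).1) measurableT cov.
  rewrite fsbig1; last by move=> i _; case: (hf i) => _ [].
  by move: (probability_setT mu) => /= ->; rewrite lee_fin ler10.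
have FSseq l : forall x, msupport mu x -> msupport mu (tau_seq tau l x).
  by elim: l => [//|l0 l IH] x Sx /=; apply: IH; exact: FS.
have AS : A `<=` msupport mu.
  move=> a Aa U oU Ua.
  have nU : nbhs a U by apply: open_nbhs_nbhs; split.
  move: nU => /nbhs_ballP [e /= e0 he].
  have [x0 Sx0] := Sne.
  have s1' : `|s| < 1 by rewrite ger0_norm // ltW.
  have eD : 0 < e / (D + 1) by rewrite divr_gt0 // ltr_wpDl.
  have [N _ HN] := @cvgr_dist_lt _ _ _ _ _ _ _ (cvg_expr s1') _ eD.
  have := HN N (leqnn N); rewrite /= sub0r normrN ger0_norm ?exprn_ge0 ?ltW // => sN.
  have [l [a' [sl [Aa' ea]]]] := pre (N * M)%N a Aa.
  apply: (FSseq l x0 Sx0 U oU); apply: he; rewrite ballEmdist /= -ea.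
  apply: (le_lt_trans (contr N l a' x0 sl)).
  have sN0 : 0 <= s ^+ N by rewrite exprn_ge0 // ltW.
  apply: (le_lt_trans (y := s ^+ N * (D + 1))).
    by apply: ler_wpM2l => //; apply: le_trans (hD a' x0) _; rewrite lerDl.
  by rewrite -ltr_pdivlMr // ltr_wpDl.
by apply/seteqP; split.
Qed.
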